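(* Every Čech-complete (in particular, every compact) Tychonoff $\Delta$-space is scattered. Equivalently, if $X$ is Čech-complete and $C_p(X)$ is distinguished, then $X$ is scattered.
   Context: A Tychonoff space is Čech-complete if it is a $G_\delta$-subset of some (equivalently, every) compactification of it. A space $X$ is scattered if every nonempty subset $A\subseteq X$ has a point isolated in $A$. A topological space $X$ is a $\Delta$-space if for every decreasing sequence $\{D_n:n\in\omega\}$ of subsets of $X$ with $\bigcap_n D_n=\emptyset$ there is a decreasing sequence $\{V_n:n\in\omega\}$ of open subsets of $X$ with $D_n\subseteq V_n$ for all $n$ and $\bigcap_n V_n=\emptyset$. $C_p(X)$ is the space of continuous real-valued functions on $X$ with the pointwise convergence topology; a locally convex space is distinguished if its strong dual is barrelled. *)

(* Defs.v *)
From HB Require Import structures.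
From mathcomp Require Import all_boot all_algebra.
From mathcomp Require Import all_classical all_reals all_analysis.
From mathcomp Require Import borel_hierarchy.
Set Implicit Arguments. Unset Strict Implicit. Unset Printing Implicit Defensive.
Local Open Scope classical_set_scope.

Definition tychonoff_space (X : topologicalType) : Prop :=
  completely_regular_space X /\ hausdorff_space X.

Definition top_embedding (X K : topologicalType) (e : X -> K) : Prop :=
  continuous e /\ injective e /\
  (forall U : set X, open U ->
     exists2 V : set K, open V & e @` U = V `&` range e).

Definition compactification_of (X K : topologicalType) (e : X -> K) : Prop :=
  compact [set: K] /\ hausdorff_space K /\ top_embedding e /\ dense (range e).

Definition cech_complete (X : topologicalType) : Prop :=
  exists (K : topologicalType) (e : X -> K),
    compactification_of e /\ Gdelta (range e).

Definition isolated_in (X : topologicalType) (A : set X) (x : X) : Prop :=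
  A x /\ exists2 U : set X, open U & U `&` A = [set x].

Definition scattered (X : topologicalType) : Prop :=
  forall A : set X, A !=set0 -> exists x, isolated_in A x.

Definition Delta_space (X : topologicalType) : Prop :=
  forall D : (set X)^nat,
    (forall n, D n.+1 `<=` D n) -> \bigcap_n D n = set0 ->
    exists V : (set X)^nat,
      [/\ forall n, open (V n), forall n, V n.+1 `<=` V n,
          forall n, D n `<=` V n & \bigcap_n V n = set0].

(* Main.v *)
Require Import Defs.
From mathcomp Require Import all_boot all_algebra.
From mathcomp Require Import all_classical all_reals all_analysis.
From mathcomp Require Import borel_hierarchy.
Set Implicit Arguments. Unset Strict Implicit. Unset Printing Implicit Defensive.
Local Open Scope classical_set_scope.

Lemma dec_le (T : Type) (C : nat -> set T) :
  (forall n, C n.+1 `<=` C n) -> forall m n, (m <= n)%N -> C n `<=` C m.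
Proof.
move=> dC m n /subnK <-; elim: (n - m)%N => [|k IH] //=.
by rewrite addSn; apply: subset_trans (dC _) IH.
Qed.

Lemma cpt_dec (K : topologicalType) (C : nat -> set K) :
  compact [set: K] -> (forall n, closed (C n)) ->
  (forall n, C n.+1 `<=` C n) -> (forall n, C n !=set0) ->
  \bigcap_n C n !=set0.
Proof.
move=> cK clC dC neC.
have FF : ProperFilter (filter_from [set: nat] C).
  apply: filter_from_proper => //; apply: filter_fromT_filter; first by exists 0%N.
  move=> i j; exists (maxn i j) => x Cx; split.
    exact: (dec_le dC (leq_maxl i j)).
  exact: (dec_le dC (leq_maxr i j)).
have [p [_ clp]] := cK _ FF filterT.
exists p => n _; apply: clC => B nB.
by apply: clp => //; exists n.
Qed.

Lemma reg_open (K : topologicalType) (x : K) (W : set K) :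
  compact [set: K] -> hausdorff_space K -> open W -> W x ->
  exists Q : set K, [/\ open Q, Q x & closure Q `<=` W].
Proof.
move=> cK hK oW Wx.
have nW : nbhs x W by apply: open_nbhs_nbhs.
have [D nD cDW] := @compact_regular K x setT hK cK filterT W nW.
exists D°; split; first exact: open_interior.
  exact: nbhs_singleton (nbhs_interior nD).
apply: subset_trans cDW; apply: closureS; exact: interior_subset.
Qed.
Lemma split_step (X K : topologicalType) (e : X -> K) (A : set X) (G : set K)
  (U : set K) :
  compact [set: K] -> hausdorff_space K -> continuous e -> injective e ->
  (forall a, A a -> forall O : set X, open O -> O a ->
     exists b, [/\ A b, O b & b <> a]) ->
  open G -> (forall a, A a -> G (e a)) -> open U ->
  (exists a, A a /\ U (e a)) ->
  exists UU : bool -> set K, [/\ forall b, open (UU b),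
     forall b, exists a, A a /\ UU b (e a),
     forall b, closure (UU b) `<=` U `&` G &
     closure (UU true) `&` closure (UU false) = set0].
Proof.
move=> cK hK ce ie nI oG AG oU [a [Aa Uea]].
have oO : open (e @^-1` U) by move/continuousP: ce; apply.
have [b [Ab Ob ba]] := nI a Aa _ oO Uea.
have neq : e a != e b by apply/eqP => /ie /esym.
have := hK; rewrite open_hausdorff => hK'.
have [[P0 P1] /= [P0a P1b] [oP0 oP1 /eqP P01]] := hK' _ _ neq.
rewrite inE in P0a; rewrite inE in P1b.
have [Q0 [oQ0 Q0a cQ0]] := reg_open cK hK
  (openI (openI oU oG) oP0) (conj (conj Uea (AG _ Aa)) P0a).
have [Q1 [oQ1 Q1b cQ1]] := reg_open cK hK
  (openI (openI oU oG) oP1) (conj (conj (Ob : U (e b)) (AG _ Ab)) P1b).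
exists (fun c => if c then Q0 else Q1); split.
- by case.
- by case; [exists a | exists b].
- by case => x /=; [move/cQ0 => [] | move/cQ1 => []].
- apply/seteqP; split=> x //= [/cQ0 [_ ?] /cQ1 [_ ?]].
  have : (P0 `&` P1) x by split.
  by rewrite P01.
Qed.
Fixpoint tree (K : Type) (stp : nat * set K -> bool -> set K) (s : seq bool)
  : set K :=
  match s with [::] => setT | b :: s' => stp (size s', tree stp s') b end.

Fixpoint pre (f : nat -> bool) (n : nat) : seq bool :=
  match n with 0 => [::] | n'.+1 => f n' :: pre f n' end.

Lemma size_pre f n : size (pre f n) = n.
Proof. by elim: n => //= n ->. Qed.

Lemma pre_agree f g n : (forall k, (k < n)%N -> f k = g k) -> pre f n = pre g n.
Proof.
elim: n => //= n IH H; rewrite H // IH // => k kn; apply: H; exact: ltnW.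
Qed.

Theorem theorem3p4 (X : topologicalType) :
  tychonoff_space X -> cech_complete X -> Delta_space X -> scattered X.
Proof.
move=> _ [K [e [[cK [hK [[ce [ie emb]] _]]] [G oG rG]]]] Del A [a0 Aa0].
apply: contrapT => nI.
have nI' : forall a, A a -> forall O : set X, open O -> O a ->
    exists b, [/\ A b, O b & b <> a].
  move=> a Aa O oO Oa; apply: contrapT => nb; apply: nI; exists a; split => //.
  exists O => //; apply/seteqP; split => x /=; last by move=> ->.
  move=> [Ox Ax]; apply: contrapT => xa; apply: nb; by exists x.
have AG : forall n a, A a -> G n (e a).
  move=> n a _; have : range e (e a) by exists a.
  by rewrite rG; apply.
have hstep : forall p : nat * set K, exists UU : bool -> set K,
    (open p.2 /\ exists a, A a /\ p.2 (e a)) ->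
    [/\ forall b, open (UU b),
     forall b, exists a, A a /\ UU b (e a),
     forall b, closure (UU b) `<=` p.2 `&` G p.1 &
     closure (UU true) `&` closure (UU false) = set0].
  move=> [n U]; case: (pselect (open U /\ exists a, A a /\ U (e a))).
    move=> [oU h]; have [UU H] := split_step cK hK ce ie nI' (oG n) (AG n) oU h.
    by exists UU.
  by move=> h; exists (fun=> set0) => /h.
have [stp Hstp] := choice hstep.
have tree_ok : forall s, open (tree stp s) /\ exists a, A a /\ tree stp s (e a).
  elim => [|b s [os hs]] /=; first by split; [exact: openT | exists a0].
  by case: (Hstp (size s, tree stp s) (conj os hs)) => o1 o2 _ _; split.
have child : forall b s, closure (tree stp (b :: s)) `<=` tree stp s `&` G (size s).
  move=> b s; have [os hs] := tree_ok s.
  by case: (Hstp (size s, tree stp s) (conj os hs)) => _ _ H _; apply: H.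
have disj : forall s,
    closure (tree stp (true :: s)) `&` closure (tree stp (false :: s)) = set0.
  move=> s; have [os hs] := tree_ok s.
  by case: (Hstp (size s, tree stp s) (conj os hs)).
pose T f n := closure (tree stp (pre f n)).
have Tcl : forall f n, closed (T f n) by move=> f n; exact: closed_closure.
have Tne : forall f n, T f n !=set0.
  move=> f n; have [_ [a [_ ha]]] := tree_ok (pre f n).
  by exists (e a); apply: subset_closure.
have Tdec : forall f n, T f n.+1 `<=` T f n.
  move=> f n x /child [hx _]; exact: subset_closure.
have TG : forall f n, T f n.+1 `<=` G n.
  by move=> f n x /child [_]; rewrite size_pre.
have Tdisj : forall f g k, f k <> g k -> T f k.+1 `&` T g k.+1 = set0.
  move=> f g k; suff : forall n, pre f n <> pre g n -> T f n `&` T g n = set0.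
    by move=> H fg; apply: H => -[].
  elim => [//|n IH] /= ne.
  case: (pselect (pre f n = pre g n)) => [eqn|nen].
    have fgn : f n <> g n by move=> h; apply: ne; rewrite h eqn.
    rewrite /T /= eqn.
    move: fgn; case: (f n); case: (g n) => fgn; try by case: fgn.
      exact: disj.
    by rewrite setIC; exact: disj.
  apply/seteqP; split => x //= [/Tdec h1 /Tdec h2].
  have : (T f n `&` T g n) x by split.
  by rewrite (IH nen).
pose B f := \bigcap_n T f n.
pose Q m (f : nat -> bool) := f m = true /\ forall k, (m < k)%N -> f k = false.
pose D n := [set x | exists m f, [/\ (n <= m)%N, Q m f & B f (e x)]].
have Ddec : forall n, D n.+1 `<=` D n.
  move=> n x [m [f [nm Qf Bf]]]; exists m, f; split => //; exact: ltnW.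
have D0 : \bigcap_n D n = set0.
  apply/seteqP; split => x //= Dx.
  have [m0 [f0 [_ [_ Q0] B0]]] := Dx 0%N I.
  have [m1 [f1 [lm [Q1 _] B1]]] := Dx m0.+1 I.
  have ne : f0 m1 <> f1 m1 by rewrite Q1 Q0.
  have : (T f0 m1.+1 `&` T f1 m1.+1) (e x) by split; [apply: B0 | apply: B1].
  by rewrite Tdisj.
have [V [oV _ DV V0]] := Del D Ddec D0.
have hW : forall n, exists Wn : set K, open Wn /\ e @` V n = Wn `&` range e.
  by move=> n; have [Wn oWn h] := emb _ (oV n); exists Wn.
have [W HW] := choice hW.
have Brange : forall f y, B f y -> range e y.
  move=> f y By; rewrite rG => n _; exact: (TG f n _ (By n.+1 I)).
have key : forall n m f, (n <= m)%N -> Q m f -> B f `<=` W n.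
  move=> n m f nm Qf y By; have [x _ exy] := Brange f y By.
  have Vx : V n x by apply: DV; exists m, f; split => //; rewrite exy.
  have : (e @` V n) y by exists x.
  by rewrite (proj2 (HW n)) => -[].
have L2 : forall f (O : set K), open O -> B f `<=` O -> exists j, T f j `<=` O.
  move=> f O oO BO; apply: contrapT => H.
  have ne : forall j, (T f j `&` ~` O) !=set0.
    move=> j; apply: contrapT => h; apply: H; exists j => y Ty.
    by apply: contrapT => nO; apply: h; exists y.
  have dd : forall j, T f j.+1 `&` ~` O `<=` T f j `&` ~` O.
    by move=> j x [h1 h2]; split => //; apply: Tdec.
  have [y Cy] := cpt_dec cK (fun j => closedI (Tcl f j) (open_closedC oO))
    dd ne.
  have [_ nOy] := Cy 0%N I; apply: nOy; apply: BO => j _.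
  by have [] := Cy j I.
have hnx : forall np : nat * ((nat -> bool) * nat), exists q : (nat -> bool) * nat,
    [/\ (np.2.2 < q.2)%N, pre q.1 np.2.2 = pre np.2.1 np.2.2 & T q.1 q.2 `<=` W np.1].
  move=> [n [f L]] /=.
  pose m := maxn L n; pose g k := if (k < L)%N then f k else (k == m).
  have Qg : Q m g.
    split; first by rewrite /g ltnNge leq_maxl /= eqxx.
    move=> k mk; rewrite /g.
    have -> : (k < L)%N = false.
      by apply/negbTE; rewrite -leqNgt; apply: leq_trans (ltnW mk); exact: leq_maxl.
    by apply/negbTE; rewrite neq_ltn mk orbT.
  have [j Tj] := L2 g (W n) (proj1 (HW n)) (key n m g (leq_maxr L n) Qg).
  exists (g, maxn j L.+1); split => /=.
  - exact: leq_maxr.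
  - by apply: pre_agree => k kL; rewrite /g kL.
  - apply: subset_trans Tj; apply: (dec_le (Tdec g)); exact: leq_maxl.
have [nx Hnx] := choice hnx.
pose sq n := iteri n (fun i p => nx (i, p)) ((fun _ => false), 0%N).
have sqS : forall n, sq n.+1 = nx (n, sq n) by [].
have sqL : forall n, (n <= (sq n).2)%N.
  elim => // n IH; rewrite sqS; have [lt _ _] := Hnx (n, sq n).
  exact: leq_ltn_trans IH lt.
pose C n := T (sq n).1 (sq n).2.
have Cdec : forall n, C n.+1 `<=` C n.
  move=> n; rewrite /C sqS; have [lt eqp _] := Hnx (n, sq n).
  apply: subset_trans; first by apply: (dec_le (Tdec _)); exact: (ltnW lt).
  by rewrite /T eqp.
have CW : forall n, C n.+1 `<=` W n.
  by move=> n; rewrite /C sqS; have [_ _ h] := Hnx (n, sq n); exact: h.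
have [y Cy] := cpt_dec cK (fun n => Tcl _ _) Cdec (fun n => Tne _ _).
have ry : range e y.
  rewrite rG => k _; apply: (TG (sq k.+1).1 k).
  apply: (dec_le (Tdec _) (sqL k.+1)); exact: Cy.
have [x _ exy] := ry.
have Vx : forall n, V n x.
  move=> n; have : (W n `&` range e) y by split => //; apply: CW; exact: Cy.
  rewrite -(proj2 (HW n)) => -[x' Vx' ex'].
  by rewrite -(ie _ _ (etrans ex' (esym exy))).
have : (\bigcap_n V n) x by move=> n _; exact: Vx.
by rewrite V0.
Qed.
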